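(* Let $\mathcal C$ be a quantum channel on a finite-dimensional system $A$, let $v\ge1$, and let $\widetilde{\mathcal C}$ be a vacuum extension of $\mathcal C$ with a $v$-dimensional vacuum sector. Let $\{\widetilde C_i=C_i\oplus C_{\mathrm{Vac},i}\}_{i=1}^r$ be a Kraus representation of $\widetilde{\mathcal C}$ consisting of linearly independent operators, and let $z$ be the number of indices $i$ with $C_i=0$. If $\widetilde{\mathcal C}$ is an extreme point of the convex set of vacuum extensions of $\mathcal C$ with $v$-dimensional vacuum sector, then $z\le\sqrt{v^2+1}-1$. In particular, if $v=1$, none of the operators $C_i$ is zero.
   Context: $\mathrm{Vac}$ is a $v$-dimensional sector orthogonal to $A$. A vacuum extension of $\mathcal C$ is a channel $\widetilde{\mathcal C}$ on $A\oplus\mathrm{Vac}$ such that (i) states supported in $A$ are mapped to states supported in $A$ and states supported in $\mathrm{Vac}$ are mapped to states supported in $\mathrm{Vac}$ (No Leakage Condition), and (ii) its restriction to $A$ (the channel with Kraus operators $P_A\widetilde C_iP_A$) is $\mathcal C$. Such extensions form a convex set; its Kraus operators have block form $C_i\oplus C_{\mathrm{Vac},i}$ with $C_i$ on $\mathcal H_A$ and $C_{\mathrm{Vac},i}$ on $\mathcal H_{\mathrm{Vac}}$. *)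

(* Defs.v *)
From HB Require Import structures.
From mathcomp Require Import all_boot all_order all_algebra.
Set Implicit Arguments. Unset Strict Implicit. Unset Printing Implicit Defensive.
Import Order.TTheory GRing.Theory Num.Theory.
Local Open Scope ring_scope.

Section QDefs.
Variable C : numClosedFieldType.

Definition adjmx m n (M : 'M[C]_(m, n)) : 'M[C]_(n, m) := (map_mx Num.conj M)^T.

Definition psd n (M : 'M[C]_n) : Prop :=
  forall x : 'cV[C]_n, 0 <= (adjmx x *m M *m x) 0 0.

Definition is_state n (rho : 'M[C]_n) : Prop := psd rho /\ \tr rho = 1.

Definition kraus_map n r (K : 'I_r -> 'M[C]_n) (rho : 'M[C]_n) : 'M[C]_n :=
  \sum_(i < r) K i *m rho *m adjmx (K i).

Definition kraus_tp n r (K : 'I_r -> 'M[C]_n) : Prop :=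
  \sum_(i < r) adjmx (K i) *m K i = 1%:M.

Definition kraus_rep n (Phi : 'M[C]_n -> 'M[C]_n) r (K : 'I_r -> 'M[C]_n) : Prop :=
  kraus_tp K /\ forall rho, Phi rho = kraus_map K rho.

Definition is_channel n (Phi : 'M[C]_n -> 'M[C]_n) : Prop :=
  exists r (K : 'I_r -> 'M[C]_n), kraus_rep Phi K.

Definition lin_indep n r (K : 'I_r -> 'M[C]_n) : Prop :=
  forall a : 'I_r -> C, \sum_(i < r) a i *: K i = 0 -> forall i, a i = 0.

(* H_A (+) H_Vac, with A the first d coordinates and Vac the last v. *)
Definition supp_A d v (M : 'M[C]_(d + v)) : Prop :=
  ursubmx M = 0 /\ dlsubmx M = 0 /\ drsubmx M = 0.
Definition supp_Vac d v (M : 'M[C]_(d + v)) : Prop :=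
  ulsubmx M = 0 /\ ursubmx M = 0 /\ dlsubmx M = 0.

Definition no_leakage d v (Ct : 'M[C]_(d + v) -> 'M[C]_(d + v)) : Prop :=
  (forall rho, is_state rho -> supp_A rho -> supp_A (Ct rho)) /\
  (forall rho, is_state rho -> supp_Vac rho -> supp_Vac (Ct rho)).

(* restriction of Ct to A: the channel with Kraus operators P_A Ct_i P_A,
   viewed on H_A; i.e. rho |-> P_A Ct(P_A rho P_A) P_A *)
Definition restrict_A d v (Ct : 'M[C]_(d + v) -> 'M[C]_(d + v)) (rho : 'M[C]_d)
  : 'M[C]_d := ulsubmx (Ct (block_mx rho 0 0 (0 : 'M[C]_v))).

Definition vacuum_extension d v (Ch : 'M[C]_d -> 'M[C]_d)
  (Ct : 'M[C]_(d + v) -> 'M[C]_(d + v)) : Prop :=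
  is_channel Ct /\ no_leakage Ct /\ forall rho, restrict_A Ct rho = Ch rho.

Definition extreme_vacuum_extension d v (Ch : 'M[C]_d -> 'M[C]_d)
  (Ct : 'M[C]_(d + v) -> 'M[C]_(d + v)) : Prop :=
  vacuum_extension Ch Ct /\
  forall (C1 C2 : 'M[C]_(d + v) -> 'M[C]_(d + v)) (t : C),
    vacuum_extension Ch C1 -> vacuum_extension Ch C2 ->
    0 < t < 1 -> (forall rho, Ct rho = t *: C1 rho + (1 - t) *: C2 rho) ->
    (forall rho, C1 rho = Ct rho) /\ (forall rho, C2 rho = Ct rho).

End QDefs.

(* Main.v *)
Require Import Defs.
From HB Require Import structures.
From mathcomp Require Import all_boot all_order all_algebra.
From mathcomp Require Import ring zify.
Import Order.TTheory GRing.Theory Num.Theory.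
Local Open Scope ring_scope.

Set Implicit Arguments. Unset Strict Implicit. Unset Printing Implicit Defensive.

Section Adj.
Variable C : numClosedFieldType.

Lemma adjmxE m n (M : 'M[C]_(m, n)) i j : adjmx M i j = (M j i)^*.
Proof. by rewrite /adjmx !mxE. Qed.

Lemma adjmxD m n (A B : 'M[C]_(m, n)) : adjmx (A + B) = adjmx A + adjmx B.
Proof. by apply/matrixP => i j; rewrite !(adjmxE, mxE) rmorphD. Qed.

Lemma adjmxZ m n a (A : 'M[C]_(m, n)) : adjmx (a *: A) = a^* *: adjmx A.
Proof. by apply/matrixP => i j; rewrite !(adjmxE, mxE) rmorphM. Qed.

Lemma adjmx0 m n : adjmx (0 : 'M[C]_(m, n)) = 0.
Proof. by apply/matrixP => i j; rewrite !(adjmxE, mxE) rmorph0. Qed.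

Lemma adjmxN m n (A : 'M[C]_(m, n)) : adjmx (- A) = - adjmx A.
Proof. by apply/matrixP => i j; rewrite !(adjmxE, mxE) rmorphN. Qed.

Lemma adjmx_sum m n I (r : seq I) (P : pred I) (F : I -> 'M[C]_(m, n)) :
  adjmx (\sum_(i <- r | P i) F i) = \sum_(i <- r | P i) adjmx (F i).
Proof.
by apply/matrixP => i j; rewrite adjmxE !summxE rmorph_sum; apply: eq_bigr => k _; rewrite adjmxE.
Qed.

Lemma adjmxM m n p (A : 'M[C]_(m, n)) (B : 'M[C]_(n, p)) :
  adjmx (A *m B) = adjmx B *m adjmx A.
Proof.
apply/matrixP => i j; rewrite adjmxE !mxE rmorph_sum; apply: eq_bigr => k _.
by rewrite !adjmxE rmorphM mulrC.
Qed.

Lemma adjmxK m n (A : 'M[C]_(m, n)) : adjmx (adjmx A) = A.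
Proof. by apply/matrixP => i j; rewrite !adjmxE conjCK. Qed.

Lemma adjmx_delta m n (i : 'I_m) (j : 'I_n) : adjmx (delta_mx i j) = delta_mx j i :> 'M[C]_(n, m).
Proof.
apply/matrixP => a b; rewrite adjmxE !mxE.
by case: (b == i); case: (a == j); rewrite /= ?rmorph1 ?rmorph0.
Qed.

Lemma adjmx1 n : adjmx (1%:M : 'M[C]_n) = 1%:M.
Proof. by apply/matrixP => i j; rewrite adjmxE !mxE eq_sym; case: (i == j); rewrite /= ?rmorph1 ?rmorph0. Qed.

Lemma adjmx_block m1 m2 n1 n2 (A : 'M[C]_(m1, n1)) (B : 'M[C]_(m1, n2))
  (D : 'M[C]_(m2, n1)) (E : 'M[C]_(m2, n2)) :
  adjmx (block_mx A B D E) = block_mx (adjmx A) (adjmx D) (adjmx B) (adjmx E).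
Proof. by rewrite /adjmx map_block_mx tr_block_mx. Qed.

Lemma entry_delta m n k (A : 'M[C]_(m, n)) (B : 'M[C]_(k, n)) p q s u :
  (A *m delta_mx p q *m adjmx B) s u = A s p * (B u q)^*.
Proof.
rewrite -(mul_delta_mx (0 : 'I_1)) mulmxA -colE -mulmxA -rowE !mxE big_ord1 !mxE.
by [].
Qed.

Lemma trmxZ' m n a (A : 'M[C]_(m, n)) : (a *: A)^T = a *: A^T.
Proof. by apply/matrixP => i j; rewrite !mxE. Qed.

End Adj.

Section Gram.
Variable C : numClosedFieldType.
Variables (n r : nat) (K : 'I_r -> 'M[C]_n).

Definition Phi (M : 'M[C]_r) (rho : 'M[C]_n) : 'M[C]_n :=
  \sum_a \sum_b M a b *: (K a *m rho *m adjmx (K b)).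
Definition Psi (M : 'M[C]_r) : 'M[C]_n :=
  \sum_a \sum_b (M a b)^* *: (adjmx (K a) *m K b).
Definition gram (M : 'M[C]_r) : Prop :=
  exists s (G : 'M[C]_(s, r)), M = G^T *m map_mx Num.conj G.

Lemma gram_kraus M : gram M -> exists s (L : 'I_s -> 'M[C]_n),
  (forall rho, kraus_map L rho = Phi M rho) /\ \sum_c adjmx (L c) *m L c = Psi M.
Proof.
case=> s [G ->]; exists s, (fun c => \sum_a G c a *: K a); split.
  move=> rho; rewrite /kraus_map /Phi.
  under eq_bigr => c _ do rewrite adjmx_sum mulmx_suml mulmx_suml.
  rewrite exchange_big; apply: eq_bigr => a _.
  under eq_bigr => c _ do rewrite mulmx_sumr.
  under eq_bigr => c _ do under eq_bigr => b _ do
    rewrite adjmxZ -!scalemxAl -scalemxAr scalerA.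
  rewrite exchange_big; apply: eq_bigr => b _.
  by rewrite !mxE scaler_suml; apply: eq_bigr => c _; rewrite !mxE.
rewrite /Psi.
under eq_bigr => c _ do rewrite adjmx_sum mulmx_suml.
rewrite exchange_big; apply: eq_bigr => a _.
under eq_bigr => c _ do rewrite mulmx_sumr; rewrite exchange_big; apply: eq_bigr => b _.
rewrite !mxE rmorph_sum scaler_suml; apply: eq_bigr => c _.
by rewrite adjmxZ -scalemxAl -scalemxAr scalerA !mxE rmorphM /= conjCK.
Qed.

Lemma gram0 : gram 0.
Proof. by exists 0%N, 0; rewrite trmx0 mul0mx. Qed.

Lemma gramD M1 M2 : gram M1 -> gram M2 -> gram (M1 + M2).
Proof.
case=> s1 [G1 ->] [s2 [G2 ->]]; exists (s1 + s2)%N, (col_mx G1 G2).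
by rewrite tr_col_mx map_col_mx mul_row_col.
Qed.

Lemma gramZ M (l : C) : 0 <= l -> gram M -> gram (l *: M).
Proof.
move=> l0 [s [G ->]]; exists s, (sqrtC l *: G).
rewrite map_mxZ /= geC0_conj ?sqrtC_ge0 // -scalemxAr trmxZ' -scalemxAl scalerA.
by rewrite -expr2 sqrtCK.
Qed.

Lemma gram_rank1 (u : 'cV[C]_r) : gram (u *m adjmx u).
Proof. by exists 1%N, u^T; rewrite trmxK /adjmx map_trmx. Qed.

Lemma gram_delta (c : 'I_r) : gram (delta_mx c c).
Proof.
have := gram_rank1 (delta_mx c (0 : 'I_1)).
by rewrite adjmx_delta mul_delta_mx.
Qed.

Lemma gram_sum I (s : seq I) (P : pred I) (F : I -> 'M[C]_r) :
  (forall i, P i -> gram (F i)) -> gram (\sum_(i <- s | P i) F i).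
Proof. by move=> h; apply: big_ind => //; [exact: gram0 | exact: gramD]. Qed.

End Gram.

Section Simple.
Variable C : numClosedFieldType.
Variables (r : nat).

Lemma id_sum_delta : (1%:M : 'M[C]_r) = \sum_c delta_mx c c.
Proof.
apply/matrixP => i j; rewrite summxE (bigD1 i) //= big1 ?addr0 => [|c ci].
  by rewrite !mxE eqxx /= eq_sym.
by rewrite !mxE eq_sym (negbTE ci).
Qed.

Lemma half_bound (w : C) : `|w| <= 2^-1 -> `|w| <= 1.
Proof.
move=> h; apply: (le_trans h); rewrite invf_le1 ?ler1n //.
Qed.

Lemma nonneg_diag (w : C) : `|w| <= 2^-1 -> 0 <= 1 + (w + w^*).
Proof.
move=> h; set x := w + w^*.
have xr : x \is Num.real by apply/CrealP; rewrite /x rmorphD /= conjCK addrC.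
have h1 : - x <= `|x| by rewrite -normrN real_ler_norm // rpredN.
have h2 : `|x| <= 1.
  apply: (le_trans (ler_normD _ _)); rewrite norm_conjC.
  have -> : (1 : C) = 2^-1 + 2^-1 by field.
  exact: lerD.
by rewrite -[x]opprK subr_ge0 (le_trans h1 h2).
Qed.

Lemma nonneg_off (w : C) : `|w| <= 2^-1 -> 0 <= 1 - w * w^*.
Proof.
move=> /half_bound h; rewrite -normCK subr_ge0.
by rewrite exprn_ile1.
Qed.

Lemma gram_simple (a b : 'I_r) (w : C) : `|w| <= 2^-1 ->
  gram (1%:M + (w *: delta_mx a b + w^* *: delta_mx b a)).
Proof.
move=> hw; have [<-|ab] := eqVneq a b.
  rewrite id_sum_delta (bigD1 a) //=.
  have -> : delta_mx a a + \sum_(i | i != a) delta_mx i i +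
      (w *: delta_mx a a + w^* *: delta_mx a a) =
      (1 + (w + w^*)) *: delta_mx a a + \sum_(i | i != a) (delta_mx i i : 'M[C]_r).
    by apply/matrixP => i j; rewrite !mxE; ring.
  apply: gramD; first by apply: gramZ; [exact: nonneg_diag | exact: gram_delta].
  by apply: gram_sum => c _; exact: gram_delta.
rewrite id_sum_delta (bigD1 a) //= (bigD1 b) /=; last by rewrite eq_sym.
set u : 'cV[C]_r := delta_mx a 0 + w^* *: delta_mx b 0.
have hu : u *m adjmx u = delta_mx a a + w *: delta_mx a b + w^* *: delta_mx b a
    + (w^* * w) *: delta_mx b b.
  rewrite /u adjmxD adjmxZ conjCK !adjmx_delta mulmxDl !mulmxDr -!scalemxAl -!scalemxAr.
  by rewrite !mul_delta_mx scalerA addrA.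
have -> : delta_mx a a + (delta_mx b b + \sum_(i | (i != a) && (i != b)) delta_mx i i) +
      (w *: delta_mx a b + w^* *: delta_mx b a) =
      u *m adjmx u + ((1 - w * w^*) *: delta_mx b b
         + \sum_(i | (i != a) && (i != b)) (delta_mx i i : 'M[C]_r)).
  by rewrite hu; apply/matrixP => i j; rewrite !mxE; ring.
apply: gramD; first exact: gram_rank1.
apply: gramD; first by apply: gramZ; [exact: nonneg_off | exact: gram_delta].
by apply: gram_sum => c _; exact: gram_delta.
Qed.

End Simple.

Section PhiAlg.
Variable C : numClosedFieldType.
Variables (n r : nat) (K : 'I_r -> 'M[C]_n).

Lemma PhiD M N rho : Phi K (M + N) rho = Phi K M rho + Phi K N rho.
Proof.
rewrite /Phi -big_split; apply: eq_bigr => a _; rewrite -big_split.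
by apply: eq_bigr => b _; rewrite mxE scalerDl.
Qed.

Lemma PhiZ c M rho : Phi K (c *: M) rho = c *: Phi K M rho.
Proof.
rewrite /Phi scaler_sumr; apply: eq_bigr => a _; rewrite scaler_sumr.
by apply: eq_bigr => b _; rewrite mxE scalerA.
Qed.

Lemma Phi1 rho : Phi K 1%:M rho = kraus_map K rho.
Proof.
rewrite /Phi /kraus_map; apply: eq_bigr => a _.
rewrite (bigD1 a) //= big1 ?addr0 => [|b ba]; first by rewrite mxE eqxx scale1r.
by rewrite mxE eq_sym (negbTE ba) scale0r.
Qed.

Lemma PsiD M N : Psi K (M + N) = Psi K M + Psi K N.
Proof.
rewrite /Psi -big_split; apply: eq_bigr => a _; rewrite -big_split.
by apply: eq_bigr => b _; rewrite mxE rmorphD scalerDl.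
Qed.

Lemma PsiZ c M : Psi K (c *: M) = c^* *: Psi K M.
Proof.
rewrite /Psi scaler_sumr; apply: eq_bigr => a _; rewrite scaler_sumr.
by apply: eq_bigr => b _; rewrite mxE rmorphM scalerA.
Qed.

Lemma Psi1 : Psi K 1%:M = \sum_a adjmx (K a) *m K a.
Proof.
rewrite /Psi; apply: eq_bigr => a _.
rewrite (bigD1 a) //= big1 ?addr0 => [|b ba]; first by rewrite mxE eqxx rmorph1 scale1r.
by rewrite mxE eq_sym (negbTE ba) rmorph0 scale0r.
Qed.

Lemma Phi_indep X : lin_indep K -> (forall rho, Phi K X rho = 0) -> X = 0.
Proof.
move=> hind hX.
have step1 : forall a u q, \sum_b X a b * (K b u q)^* = 0.
  move=> a u q.
  pose c a := \sum_b X a b * (K b u q)^*.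
  have hs : \sum_a c a *: K a = 0.
    apply/matrixP => s p; rewrite summxE mxE.
    transitivity ((Phi K X (delta_mx p q)) s u); last by rewrite hX mxE.
    rewrite /Phi summxE; apply: eq_bigr => a' _.
    rewrite summxE mxE /c mulr_suml; apply: eq_bigr => b _.
    by rewrite mxE entry_delta; ring.
  exact: (hind c hs a).
apply/matrixP => a b; rewrite mxE.
have hs : \sum_b (X a b)^* *: K b = 0.
  apply/matrixP => u q; rewrite summxE mxE.
  transitivity ((\sum_b X a b * (K b u q)^*)^*); last by rewrite step1 rmorph0.
  by rewrite rmorph_sum; apply: eq_bigr => b' _; rewrite mxE rmorphM /= conjCK.
by apply/eqP; rewrite -conjC_eq0; apply/eqP; exact: (hind _ hs b).
Qed.

End PhiAlg.

Section BlockSums.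
Variable C : numClosedFieldType.
Variables d v : nat.

Lemma blockA_sum I (s : seq I) (P : pred I) (F : I -> 'M[C]_d) :
  \sum_(i <- s | P i) (block_mx (F i) 0 0 0 : 'M[C]_(d + v)) =
  block_mx (\sum_(i <- s | P i) F i) 0 0 0.
Proof.
elim: s => [|x s IH]; first by rewrite !big_nil block_mx0.
rewrite !big_cons; case: (P x) => //.
by rewrite IH add_block_mx !addr0.
Qed.

Lemma blockV_sum I (s : seq I) (P : pred I) (F : I -> 'M[C]_v) :
  \sum_(i <- s | P i) (block_mx 0 0 0 (F i) : 'M[C]_(d + v)) =
  block_mx 0 0 0 (\sum_(i <- s | P i) F i).
Proof.
elim: s => [|x s IH]; first by rewrite !big_nil block_mx0.
rewrite !big_cons; case: (P x) => //.
by rewrite IH add_block_mx !addr0.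
Qed.

Lemma scale_blockA c (X : 'M[C]_d) :
  c *: (block_mx X 0 0 0 : 'M[C]_(d + v)) = block_mx (c *: X) 0 0 0.
Proof. by rewrite scale_block_mx !scaler0. Qed.

Lemma scale_blockV c (X : 'M[C]_v) :
  c *: (block_mx 0 0 0 X : 'M[C]_(d + v)) = block_mx 0 0 0 (c *: X).
Proof. by rewrite scale_block_mx !scaler0. Qed.

Lemma blockAV_sum I (s : seq I) (P : pred I) (F : I -> 'M[C]_d) (G : I -> 'M[C]_v) :
  \sum_(i <- s | P i) (block_mx (F i) 0 0 (G i) : 'M[C]_(d + v)) =
  block_mx (\sum_(i <- s | P i) F i) 0 0 (\sum_(i <- s | P i) G i).
Proof.
elim: s => [|x s IH]; first by rewrite !big_nil block_mx0.
rewrite !big_cons; case: (P x) => //.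
by rewrite IH add_block_mx !addr0.
Qed.

End BlockSums.

Section BlockDiag.
Variable C : numClosedFieldType.
Variables (d v r : nat) (K : 'I_r -> 'M[C]_(d + v)).
Hypothesis hbd : forall i, ursubmx (K i) = 0 /\ dlsubmx (K i) = 0.

Lemma Kblock i : K i = block_mx (ulsubmx (K i)) 0 0 (drsubmx (K i)).
Proof. by have [h1 h2] := hbd i; rewrite -{1}[K i]submxK h1 h2. Qed.

Lemma term_blockA a b (R : 'M[C]_d) :
  K a *m block_mx R 0 0 (0 : 'M[C]_v) *m adjmx (K b) =
  block_mx (ulsubmx (K a) *m R *m adjmx (ulsubmx (K b))) 0 0 0.
Proof.
rewrite {1}[K a]Kblock {1}[K b]Kblock adjmx_block !adjmx0 !mulmx_block.
by rewrite !(mulmx0, mul0mx, addr0, add0r).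
Qed.

Lemma term_blockV a b (R : 'M[C]_v) :
  K a *m block_mx 0 0 0 R *m adjmx (K b) =
  block_mx 0 0 0 (drsubmx (K a) *m R *m adjmx (drsubmx (K b))).
Proof.
rewrite {1}[K a]Kblock {1}[K b]Kblock adjmx_block !adjmx0 !mulmx_block.
by rewrite !(mulmx0, mul0mx, addr0, add0r).
Qed.

Lemma PhiA M (R : 'M[C]_d) : Phi K M (block_mx R 0 0 0) =
  block_mx (\sum_a \sum_b M a b *: (ulsubmx (K a) *m R *m adjmx (ulsubmx (K b)))) 0 0 0.
Proof.
rewrite /Phi -blockA_sum; apply: eq_bigr => a _; rewrite -blockA_sum.
by apply: eq_bigr => b _; rewrite term_blockA scale_blockA.
Qed.

Lemma PhiV M (R : 'M[C]_v) : Phi K M (block_mx 0 0 0 R) =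
  block_mx 0 0 0 (\sum_a \sum_b M a b *: (drsubmx (K a) *m R *m adjmx (drsubmx (K b)))).
Proof.
rewrite /Phi -blockV_sum; apply: eq_bigr => a _; rewrite -blockV_sum.
by apply: eq_bigr => b _; rewrite term_blockV scale_blockV.
Qed.

Lemma Phi_no_leakage M : no_leakage (Phi K M).
Proof.
split=> rho _ [h1 [h2 h3]].
  rewrite -[rho]submxK h1 h2 h3 PhiA.
  by rewrite /supp_A block_mxKur block_mxKdl block_mxKdr.
rewrite -[rho]submxK h1 h2 h3 PhiV.
by rewrite /supp_Vac block_mxKul block_mxKur block_mxKdl.
Qed.

Lemma Psi_block M : Psi K M =
  block_mx (\sum_a \sum_b (M a b)^* *: (adjmx (ulsubmx (K a)) *m ulsubmx (K b))) 0 0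
           (\sum_a \sum_b (M a b)^* *: (adjmx (drsubmx (K a)) *m drsubmx (K b))).
Proof.
rewrite /Psi.
have hterm : forall a b, adjmx (K a) *m K b =
   block_mx (adjmx (ulsubmx (K a)) *m ulsubmx (K b)) 0 0
            (adjmx (drsubmx (K a)) *m drsubmx (K b)).
  move=> a b; rewrite {1}[K a]Kblock {1}[K b]Kblock adjmx_block !adjmx0 mulmx_block.
  by rewrite !(mulmx0, mul0mx, addr0, add0r).
rewrite -blockAV_sum; apply: eq_bigr => a _; rewrite -blockAV_sum.
by apply: eq_bigr => b _; rewrite hterm scale_block_mx !scaler0.
Qed.

End BlockDiag.

Section States.
Variable C : numClosedFieldType.

Lemma psd_rank1 n (w : 'cV[C]_n) : psd (w *m adjmx w).
Proof.
move=> x; rewrite mulmxA -mulmxA -{2}[x]adjmxK -adjmxM.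
by rewrite !mxE big_ord1 adjmxE mul_conjC_ge0.
Qed.

Lemma state_delta n (i : 'I_n) : is_state (delta_mx i i : 'M[C]_n).
Proof.
split.
  by have := psd_rank1 (delta_mx i (0 : 'I_1)); rewrite adjmx_delta mul_delta_mx.
rewrite /mxtrace (bigD1 i) //= big1 ?addr0 => [|k ki]; first by rewrite mxE eqxx.
by rewrite mxE (negbTE ki).
Qed.

Lemma sum_sq_eq0 I (F : 'I_I -> C) : \sum_i F i * (F i)^* = 0 -> forall i, F i = 0.
Proof.
move=> h i; apply/eqP; rewrite -mul_conjC_eq0; apply/eqP.
by apply: (psumr_eq0P _ h) => // j _; exact: mul_conjC_ge0.
Qed.

Lemma block_diag_of_leak d v r (Ct : 'M[C]_(d + v) -> 'M[C]_(d + v))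
  (K : 'I_r -> 'M[C]_(d + v)) :
  kraus_rep Ct K -> no_leakage Ct ->
  forall i, ursubmx (K i) = 0 /\ dlsubmx (K i) = 0.
Proof.
move=> [_ hCt] [hA hV] i; split; apply/matrixP => p q; rewrite !mxE.
  pose rho : 'M[C]_(d + v) := delta_mx (rshift d q) (rshift d q).
  have hs : supp_Vac rho.
    by split; [|split]; apply/matrixP => x y; rewrite !mxE ?eq_lrshift ?eq_rlshift ?andbF.
  have [h1 _] := hV rho (state_delta _) hs.
  have := congr1 (fun M : 'M[C]_d => M p p) h1.
  rewrite hCt /kraus_map !mxE summxE => h.
  apply: (sum_sq_eq0 (F := fun i => K i (lshift v p) (rshift d q))) => //.
  by rewrite -[RHS]h; apply: eq_bigr => j _; rewrite entry_delta.
pose rho : 'M[C]_(d + v) := delta_mx (lshift v q) (lshift v q).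
have hs : supp_A rho.
  by split; [|split]; apply/matrixP => x y; rewrite !mxE ?eq_lrshift ?eq_rlshift ?andbF.
have [_ [_ h1]] := hA rho (state_delta _) hs.
have := congr1 (fun M : 'M[C]_v => M p p) h1.
rewrite hCt /kraus_map !mxE summxE => h.
apply: (sum_sq_eq0 (F := fun i => K i (rshift d p) (lshift v q))) => //.
by rewrite -[RHS]h; apply: eq_bigr => j _; rewrite entry_delta.
Qed.

End States.

Section Kernel.
Variable C : numClosedFieldType.

Lemma exists_kernel (T J : finType) (A : {set T}) (f : T -> J -> C) :
  (#|J| < #|A|)%N -> exists c : T -> C, (forall t, t \notin A -> c t = 0) /\
    (exists t, c t != 0) /\ (forall j, \sum_t c t * f t j = 0).
Proof.
move=> hJA.
pose M : 'M[C]_(#|A|, #|J|) := \matrix_(i, j) f (enum_val i) (enum_val j).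
have hW : kermx M != 0.
  rewrite -mxrank_eq0 mxrank_ker -lt0n subn_gt0.
  exact: leq_ltn_trans (rank_leq_col M) hJA.
have [k hk] : exists k, row k (kermx M) != 0.
  case: (pickP (fun k => row k (kermx M) != 0)) => [k hk|h]; first by exists k.
  by case/eqP: hW; apply/row_matrixP => k; rewrite row0; apply/eqP; move: (h k) => /negbFE.
set u := row k (kermx M).
have huM : u *m M = 0 by rewrite /u -row_mul mulmx_ker row0.
have [i0 hi0] : exists i, u 0 i != 0.
  case: (pickP (fun i => u 0 i != 0)) => [i hi|h]; first by exists i.
  case/eqP: hk; apply/matrixP => x y; rewrite ord1 [RHS]mxE; apply/eqP.
  by move: (h y) => /negbFE; rewrite /u !mxE.
pose c t := \sum_(i < #|A|) (enum_val i == t)%:R * u 0 i.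
have hc i : c (enum_val i) = u 0 i.
  rewrite /c (bigD1 i) //= eqxx mul1r big1 ?addr0 // => i' hi'.
  by rewrite (inj_eq enum_val_inj) (negbTE hi') mul0r.
exists c; split; last split.
- move=> t ht; rewrite /c big1 // => i _.
  have : enum_val i \in A by exact: enum_valP.
  by case: eqP => [->|]; [rewrite (negbTE ht) | rewrite mul0r].
- by exists (enum_val i0); rewrite hc.
move=> j.
have := congr1 (fun N : 'M[C]_(1, #|J|) => N 0 (enum_rank j)) huM.
rewrite !mxE => h; rewrite -[RHS]h.
rewrite /c; under eq_bigr => t _ do rewrite mulr_suml.
rewrite exchange_big; apply: eq_bigr => i _.
rewrite (bigD1 (enum_val i)) //= eqxx mul1r big1 ?addr0 => [|t ht].
  by rewrite /M !mxE enum_rankK.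
by rewrite eq_sym (negbTE ht) !mul0r.
Qed.

End Kernel.

Section Decomp.
Variable C : numClosedFieldType.
Variable r : nat.

Lemma conj_half (x : C) : (2^-1 * x)^* = 2^-1 * x^*.
Proof. by rewrite rmorphM fmorphV /= rmorph_nat. Qed.

Lemma sumH (X : 'M[C]_r) : adjmx X = X ->
  \sum_a \sum_b ((2^-1 * X a b) *: delta_mx a b + (2^-1 * X a b)^* *: delta_mx b a) = X.
Proof.
move=> hX.
under eq_bigr => a _ do rewrite big_split.
rewrite big_split /=.
have -> : \sum_a \sum_b (2^-1 * X a b) *: delta_mx a b = 2^-1 *: X.
  rewrite {2}[X]matrix_sum_delta scaler_sumr; apply: eq_bigr => a _.
  by rewrite scaler_sumr; apply: eq_bigr => b _; rewrite scalerA.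
have -> : \sum_a \sum_b (2^-1 * X a b)^* *: delta_mx b a = 2^-1 *: X.
  rewrite exchange_big -{2}hX [adjmx X]matrix_sum_delta scaler_sumr; apply: eq_bigr => b _.
  by rewrite scaler_sumr; apply: eq_bigr => a _; rewrite scalerA conj_half adjmxE.
rewrite -scalerDl.
have -> : (2^-1 + 2^-1 : C) = 1 by field.
by rewrite scale1r.
Qed.

Lemma gram_decomp (X : 'M[C]_r) : (0 < r)%N -> adjmx X = X ->
  (forall a b, `|X a b| <= 1) -> gram (1%:M + ((r * r)%:R)^-1 *: X).
Proof.
move=> r0 hX hb.
set m : C := (r * r)%:R.
have m0 : m != 0 by rewrite /m pnatr_eq0 muln_eq0 negb_or -!lt0n r0.
have -> : 1%:M + m^-1 *: X = \sum_a \sum_b m^-1 *: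
   (1%:M + ((2^-1 * X a b) *: delta_mx a b + (2^-1 * X a b)^* *: delta_mx b a)).
  under eq_bigr => a _ do rewrite -scaler_sumr big_split /=.
  rewrite -scaler_sumr big_split /= sumH // !sumr_const !card_ord.
  by rewrite scalerDr -mulrnA -scaler_nat scalerA mulVf // scale1r.
apply: gram_sum => a _; apply: gram_sum => b _.
apply: gramZ; first by rewrite invr_ge0 ler0n.
apply: gram_simple.
by rewrite normrM normfV normr_nat ler_piMr ?invr_ge0 ?ler0n.
Qed.

End Decomp.

Section Pick.
Variable C : numClosedFieldType.
Variables (r v : nat) (D : 'I_r -> 'M[C]_v) (W : {set 'I_r * 'I_r}).
Hypothesis Wsym : forall a b, (a, b) \in W -> (b, a) \in W.

Definition FF (Y : 'M[C]_r) : 'M[C]_v :=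
  \sum_a \sum_b Y a b *: (adjmx (D b) *m D a).

Definition good (X : 'M[C]_r) :=
  [/\ X != 0, forall a b, X a b != 0 -> (a, b) \in W & FF X = 0].

Lemma FFD Y1 Y2 : FF (Y1 + Y2) = FF Y1 + FF Y2.
Proof.
rewrite /FF -big_split; apply: eq_bigr => a _; rewrite -big_split.
by apply: eq_bigr => b _; rewrite mxE scalerDl.
Qed.

Lemma FFZ s Y : FF (s *: Y) = s *: FF Y.
Proof.
rewrite /FF scaler_sumr; apply: eq_bigr => a _; rewrite scaler_sumr.
by apply: eq_bigr => b _; rewrite mxE scalerA.
Qed.

Lemma FF_adj Y : FF (adjmx Y) = adjmx (FF Y).
Proof.
rewrite /FF adjmx_sum exchange_big; apply: eq_bigr => b _.
rewrite adjmx_sum; apply: eq_bigr => a _.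
by rewrite adjmxZ adjmxM adjmxK adjmxE.
Qed.

Lemma good_from_kernel : (v * v < #|W|)%N -> exists Y, good Y.
Proof.
move=> hc.
have hJ : (#|{: 'I_v * 'I_v}| < #|W|)%N by rewrite card_prod card_ord.
have [c [c0 [[t ct] cF]]] := exists_kernel
  (fun (p : 'I_r * 'I_r) (q : 'I_v * 'I_v) => (adjmx (D p.2) *m D p.1) q.1 q.2) hJ.
exists (\matrix_(a, b) c (a, b)); split.
- apply/eqP => /matrixP /(_ t.1 t.2); rewrite !mxE -surjective_pairing.
  by move/eqP; rewrite (negbTE ct).
- move=> a b; rewrite mxE; apply: contraNT => hab; apply/eqP; exact: c0.
apply/matrixP => q1 q2; rewrite summxE mxE -[RHS](cF (q1, q2)).
under eq_bigr => a _ do rewrite summxE.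
rewrite pair_bigA /=; apply: eq_bigr => [[a b]] _ /=.
by rewrite !mxE.
Qed.


Lemma FFN Y : FF (- Y) = - FF Y.
Proof. by rewrite -scaleN1r FFZ scaleN1r. Qed.

Lemma good_herm Y : good Y -> exists X, adjmx X = X /\ good X.
Proof.
case=> Y0 Ysupp YF.
have hadjF : FF (adjmx Y) = 0 by rewrite FF_adj YF adjmx0.
have Asupp a b : adjmx Y a b != 0 -> (a, b) \in W.
  by rewrite adjmxE conjC_eq0 => /Ysupp /Wsym.
pose X1 := Y + adjmx Y.
pose X2 := 'i *: (Y - adjmx Y).
have h1 : adjmx X1 = X1 by rewrite /X1 adjmxD adjmxK addrC.
have h2 : adjmx X2 = X2.
  by rewrite /X2 adjmxZ conjCi adjmxD adjmxN adjmxK scaleNr -scalerN opprB.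
have F1 : FF X1 = 0 by rewrite /X1 FFD YF hadjF addr0.
have F2 : FF X2 = 0 by rewrite /X2 FFZ FFD FFN YF hadjF oppr0 addr0 scaler0.
have S1 a b : X1 a b != 0 -> (a, b) \in W.
  rewrite /X1 mxE; case: (eqVneq (Y a b) 0) => [->|]; last by move=> /Ysupp.
  by rewrite add0r => /Asupp.
have S2 a b : X2 a b != 0 -> (a, b) \in W.
  rewrite /X2 !mxE; case: (eqVneq (Y a b) 0) => [->|]; last by move=> /Ysupp.
  by rewrite sub0r mulrN oppr_eq0 mulf_eq0 negb_or conjC_eq0 => /andP [_ /Ysupp /Wsym].
case: (eqVneq X1 0) => [X10|X1n0]; last by exists X1; split => //; split.
exists X2; split => //; split => //.
apply: contraNneq Y0 => X20; apply/eqP/matrixP => a b.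
have e1 := congr1 (fun M : 'M[C]_r => M a b) X10.
have e2 := congr1 (fun M : 'M[C]_r => M a b) X20.
move: e1 e2; rewrite /X1 /X2 !mxE => e1 /eqP; rewrite mulf_eq0 (negbTE (neq0Ci C)) /=.
rewrite subr_eq0 => /eqP e2; move: e1; rewrite -e2 -mulr2n => /eqP.
by rewrite mulrn_eq0 /= => /eqP.
Qed.

Lemma good_norm X0 : adjmx X0 = X0 -> good X0 ->
  exists X, [/\ adjmx X = X, good X & forall a b, `|X a b| <= 1].
Proof.
move=> hX [X0n supp F0].
set S := \sum_a \sum_b `|X0 a b|.
have S0 : 0 <= S by apply: sumr_ge0 => a _; apply: sumr_ge0 => b _.
have S1 : 0 < 1 + S by rewrite ltr_wpDr.
set s := (1 + S)^-1.
have s0 : 0 < s by rewrite invr_gt0.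
exists (s *: X0); split.
- by rewrite adjmxZ geC0_conj ?ltW // hX.
- split.
  + apply: contraNneq X0n => h; apply/eqP.
    by rewrite -[X0]scale1r -(mulVf (lt0r_neq0 s0)) -scalerA h scaler0.
  + move=> a b; rewrite mxE mulf_eq0 negb_or => /andP [_]; exact: supp.
  + by rewrite FFZ F0 scaler0.
move=> a b; rewrite mxE normrM (ger0_norm (ltW s0)) mulrC ler_pdivrMr // mul1r.
apply: (le_trans _ (ler_wpDl ler01 (lexx S))).
rewrite /S (bigD1 a) //= (bigD1 b) //= -addrA lerDl.
by rewrite addr_ge0 ?sumr_ge0 // => i _; rewrite sumr_ge0.
Qed.

End Pick.

Unset Implicit Arguments. Set Strict Implicit. Set Printing Implicit Defensive.

Theorem proposition5 (C : numClosedFieldType) (d v : nat) (hd : (0 < d)%N)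
  (hv : (1 <= v)%N) (Ch : 'M[C]_d -> 'M[C]_d) (hCh : is_channel Ch)
  (Ct : 'M[C]_(d + v) -> 'M[C]_(d + v)) (r : nat) (K : 'I_r -> 'M[C]_(d + v))
  (hK : kraus_rep Ct K) (hind : lin_indep K)
  (hext : extreme_vacuum_extension Ch Ct) :
  ((#|[set i : 'I_r | ulsubmx (K i) == 0]|)%:R <= sqrtC ((v ^ 2).+1)%:R - 1 :> C)
  /\ (v = 1%N -> forall i : 'I_r, ulsubmx (K i) != 0).
Proof.
have [[hchan [hnl hres]] hextr] := hext.
have [htp hCt] := hK.
have hbd := block_diag_of_leak hK hnl.
set Z := [set i : 'I_r | ulsubmx (K i) == 0].
suff main : (#|Z|.+1 * #|Z|.+1 <= (v ^ 2).+1)%N.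
  split.
    rewrite lerBrDr natr1 -[X in X <= _](@sqrCK _ (#|Z|.+1)%:R) ?ler0n //.
    rewrite ler_sqrtC ?nnegrE ?exprn_ge0 ?ler0n // -natrX ler_nat.
    by move: main; rewrite expnS expn1.
  move=> v1 i; apply/negP => /eqP hi.
  have : (0 < #|Z|)%N by apply/card_gt0P; exists i; rewrite inE hi.
  move: main; rewrite v1; lia.
rewrite leqNgt; apply/negP => hlt.
have [k hk] : exists k, ulsubmx (K k) != 0.
  case: (pickP (fun k => ulsubmx (K k) != 0)) => [k hk | h]; first by exists k.
  exfalso.
  have := Psi1 K; rewrite htp Psi_block // => /(congr1 ulsubmx).
  rewrite block_mxKul big1 => [|a _].
    move/matrixP/(_ (Ordinal hd) (Ordinal hd)); rewrite !mxE eqxx /= => /eqP.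
    by rewrite eq_sym oner_eq0.
  apply: big1 => b _; move: (h a) => /negbFE/eqP ->.
  by rewrite adjmx0 mul0mx scaler0.
have r0 : (0 < r)%N by case: k {hk} => k' hk'; lia.
pose S := k |: Z.
pose W := setX S S :\ (k, k).
have Wsym a b : (a, b) \in W -> (b, a) \in W.
  rewrite !inE !xpair_eqE => /andP [h1 /andP [h2 h3]].
  by move: h1 h2 h3 => /=; rewrite andbC => -> -> ->.
have cardS : #|S| = #|Z|.+1 by rewrite cardsU1 inE hk.
have cardW : (#|W|).+1 = (#|Z|.+1 * #|Z|.+1)%N.
  have := cardsD1 (k, k) (setX S S); rewrite cardsX cardS.
  by rewrite !inE /= eqxx /= => ->.
have hcard : (v * v < #|W|)%N by move: hlt cardW; rewrite expnS expn1; lia.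
have hAB a b : (a, b) \in W -> ulsubmx (K a) = 0 \/ ulsubmx (K b) = 0.
  rewrite !inE !xpair_eqE => /andP [hn /andP [ha hb]]; move: ha hb => /= ha hb.
  case/orP: ha => [/eqP ak|]; last by move/eqP; left.
  case/orP: hb => [/eqP bk|]; last by move/eqP; right.
  by move: hn; rewrite ak bk !eqxx.
have [Y gY] := good_from_kernel (fun i => drsubmx (K i)) hcard.
have [X0 [hX0 gX0]] := good_herm Wsym gY.
have [X [hX [Xn0 Xsupp XF] Xb]] := good_norm hX0 gX0.
have hXab a b : X a b = 0 \/ ulsubmx (K a) = 0 \/ ulsubmx (K b) = 0.
  case: (eqVneq (X a b) 0) => [|/Xsupp /hAB]; by [left | right].
have PhiX0 rho : Phi K X (block_mx rho 0 0 0) = 0.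
  rewrite PhiA // big1 ?block_mx0 // => a _; apply: big1 => b _.
  case: (hXab a b) => [->|[->|->]]; first by rewrite scale0r.
    by rewrite !mul0mx scaler0.
  by rewrite adjmx0 mulmx0 scaler0.
have PsiX0 : Psi K X = 0.
  rewrite Psi_block // big1 => [|a _]; last first.
    apply: big1 => b _.
    case: (hXab a b) => [->|[->|->]]; first by rewrite rmorph0 scale0r.
      by rewrite adjmx0 mul0mx scaler0.
    by rewrite mulmx0 scaler0.
  have -> : \sum_a \sum_b (X a b)^* *: (adjmx (drsubmx (K a)) *m drsubmx (K b)) =
       FF (fun i => drsubmx (K i)) X.
    rewrite /FF exchange_big; apply: eq_bigr => b _; apply: eq_bigr => a _.
    by rewrite -{2}hX adjmxE.
  by rewrite XF block_mx0.
have hvac c : gram (1%:M + c *: X) -> vacuum_extension Ch (Phi K (1%:M + c *: X)).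
  move=> hg; split; [|split].
  - have [s [L [hL1 hL2]]] := gram_kraus K hg.
    exists s, L; split; last by move=> rho; rewrite hL1.
    by rewrite /kraus_tp hL2 PsiD PsiZ PsiX0 scaler0 addr0 Psi1.
  - exact: Phi_no_leakage.
  move=> rho; rewrite /restrict_A PhiD PhiZ PhiX0 scaler0 addr0 Phi1 -hCt.
  exact: hres.
set m : C := ((r * r)%:R)^-1.
have g1 : gram (1%:M + m *: X) by apply: gram_decomp.
have g2 : gram (1%:M + (- m) *: X).
  rewrite scaleNr -scalerN; apply: gram_decomp => //.
    by rewrite adjmxN hX.
  by move=> a b; rewrite mxE normrN.
have ht : (0 < (2^-1 : C)) && ((2^-1 : C) < 1).
  by rewrite invr_gt0 ltr0n invf_lt1 ?ltr0n ?ltr1n.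
have hdec rho : Ct rho = 2^-1 *: Phi K (1%:M + m *: X) rho +
    (1 - 2^-1) *: Phi K (1%:M + (- m) *: X) rho.
  rewrite !PhiD !PhiZ Phi1 hCt.
  by apply/matrixP => i j; rewrite !mxE; field.
have [h1 _] := hextr _ _ _ (hvac _ g1) (hvac _ g2) ht hdec.
have hm : m != 0 by rewrite invr_eq0 pnatr_eq0 muln_eq0 negb_or -!lt0n r0.
have : X = 0.
  apply: (Phi_indep hind) => rho.
  have := h1 rho; rewrite PhiD PhiZ Phi1 -hCt => /(congr1 (fun M => M - Ct rho)).
  rewrite /= addrAC !subrr add0r => hz.
  by rewrite -[Phi K X rho]scale1r -(mulVf hm) -scalerA hz scaler0.
by apply/eqP.
Qed.
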